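(* Let $F:\mathbb{R}\to\mathbb{R}$, $b\in\mathbb{R}$ and $\gamma>0$ satisfy A1 and A2, with $\nu,\omega^{(0)},\Lambda_j,V$ as in the context. Then $\Lambda_j\in\mathbb{R}\setminus\{0\}$ for $1\le j\le\nu$; $V(\omega^{(0)})(e_j+e_l)\in\mathbb{R}\setminus\{0\}$ for $1\le j,l\le\nu$; and $V(\omega^{(0)})(e_j-e_l)\in\mathbb{R}\setminus\{0\}$ for $1\le j\ne l\le\nu$.
   Context: A1: $F$ is real analytic in a neighborhood of $-b$ with $F'(-b)>0$. A2: $0<\gamma<\sqrt{F'(-b)}$ and $2\sqrt{F'(-b)}\notin\gamma\mathbb{Z}$. $\nu$ is the integer with $\nu\gamma<2\sqrt{F'(-b)}<(\nu+1)\gamma$; $\omega^{(0)}_j=2\arcsin(j\gamma/(2\sqrt{F'(-b)}))$, $\omega^{(0)}=(\omega^{(0)}_1,\dots,\omega^{(0)}_\nu)$; $g=(1,\dots,\nu)$; $e_j$ the $j$-th unit vector in $\mathbb{Z}^\nu$; $\Lambda_j=\frac{(j\gamma)^2\cos(\omega^{(0)}_j/2)}{4\sin^3(\omega^{(0)}_j/2)}$; for $m\in\mathbb{Z}^\nu$, $V(\omega)(m)=F'(-b)$ if $\langle g,m\rangle=0$ and $V(\omega)(m)=F'(-b)-\frac{\langle g,m\rangle^2\gamma^2}{4\sin^2(\langle\omega,m\rangle/2)}$ otherwise (with value $\infty$ if $\langle g,m\rangle\ne0$ and $\langle\omega,m\rangle\in2\pi\mathbb{Z}$). *)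

(* Defs.v *)
From Stdlib Require Import Reals ZArith ClassicalEpsilon.
From Coquelicot Require Import Coquelicot.
Open Scope R_scope.

Definition real_analytic_near (F : R -> R) (x0 : R) : Prop :=
  exists r : R, 0 < r /\ exists a : nat -> R,
    forall x, Rabs (x - x0) < r -> is_pseries a (x - x0) (F x).

(* Sums over the index range 1..n :  rsum n f = f 1 + ... + f n. *)
Fixpoint rsum (n : nat) (f : nat -> R) : R :=
  match n with O => 0 | S k => rsum k f + f (S k) end.
Fixpoint zsum (n : nat) (f : nat -> Z) : Z :=
  match n with O => 0%Z | S k => (zsum k f + f (S k))%Z end.

(* Vectors of Z^nu / R^nu are represented as functions nat -> _, indices 1..nu. *)
Definition gdot (nu : nat) (m : nat -> Z) : Z :=
  zsum nu (fun j => (Z.of_nat j * m j)%Z).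
Definition wdot (nu : nat) (omega : nat -> R) (m : nat -> Z) : R :=
  rsum nu (fun j => omega j * IZR (m j)).

Definition ev (j : nat) : nat -> Z := fun i => if Nat.eqb i j then 1%Z else 0%Z.
Definition vadd (m n : nat -> Z) : nat -> Z := fun i => (m i + n i)%Z.
Definition vsub (m n : nat -> Z) : nat -> Z := fun i => (m i - n i)%Z.

(* omega^(0)_j = 2 arcsin(j gamma / (2 sqrt(F'(-b)))), with c = F'(-b) *)
Definition omega0 (c gamma : R) (j : nat) : R :=
  2 * asin (INR j * gamma / (2 * sqrt c)).

Definition Lambda (c gamma : R) (j : nat) : R :=
  (INR j * gamma) ^ 2 * cos (omega0 c gamma j / 2)
  / (4 * (sin (omega0 c gamma j / 2)) ^ 3).

(* V(omega)(m): value in R, or None standing for the value "infinity". *)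
Definition V (nu : nat) (c gamma : R) (omega : nat -> R) (m : nat -> Z) : option R :=
  let k := gdot nu m in
  if Z.eqb k 0 then Some c
  else if excluded_middle_informative (exists z : Z, wdot nu omega m = 2 * PI * IZR z)
       then None
       else Some (c - (IZR k) ^ 2 * gamma ^ 2
                      / (4 * (sin (wdot nu omega m / 2)) ^ 2)).

Definition real_nonzero (v : option R) : Prop :=
  exists x : R, v = Some x /\ x <> 0.

(* Main.v *)
Require Import Defs.
From Stdlib Require Import Reals ZArith Lra Lia Psatz ClassicalEpsilon.
From Coquelicot Require Import Coquelicot.
Open Scope R_scope.

Lemma cos_half_lt a b : 0 < a < PI/2 -> 0 < b < PI/2 ->
  cos ((a+b)/2) < cos ((a-b)/2).
Proof.
  intros Ha Hb.
  assert (Hc : cos ((a-b)/2) = cos (Rabs ((a-b)/2))).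
  { unfold Rabs; destruct (Rcase_abs _); [rewrite cos_neg|]; reflexivity. }
  rewrite Hc. apply cos_decreasing_1.
  - apply Rabs_pos.
  - unfold Rabs; destruct (Rcase_abs _); lra.
  - lra.
  - lra.
  - unfold Rabs; destruct (Rcase_abs _); lra.
Qed.

Lemma key_plus a b : 0 < a < PI/2 -> 0 < b < PI/2 ->
  0 < sin (a+b) < sin a + sin b.
Proof.
  intros Ha Hb. rewrite form3.
  assert (E : sin (a+b) = 2 * sin ((a+b)/2) * cos ((a+b)/2)).
  { rewrite <- sin_2a. f_equal. field. }
  assert (S1 : 0 < sin ((a+b)/2)) by (apply sin_gt_0; lra).
  assert (C1 : 0 < cos ((a+b)/2)) by (apply cos_gt_0; lra).
  pose proof (cos_half_lt a b Ha Hb).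
  rewrite E. split; nra.
Qed.

Lemma key_minus a b : 0 < b -> b < a -> a < PI/2 ->
  0 < sin a - sin b < sin (a-b).
Proof.
  intros H1 H2 H3. rewrite form4.
  assert (E : sin (a-b) = 2 * sin ((a-b)/2) * cos ((a-b)/2)).
  { rewrite <- sin_2a. f_equal. field. }
  assert (S1 : 0 < sin ((a-b)/2)) by (apply sin_gt_0; lra).
  assert (C1 : 0 < cos ((a+b)/2)) by (apply cos_gt_0; lra).
  assert (Ha : 0 < a < PI/2) by lra. assert (Hb : 0 < b < PI/2) by lra.
  pose proof (cos_half_lt a b Ha Hb).
  rewrite E. split; nra.
Qed.

Lemma val_nz c s gamma K S phi : 0 < s -> c = s*s -> K*gamma = 2*s*S ->
  sin phi <> 0 -> S^2 <> (sin phi)^2 ->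
  c - K^2 * gamma^2 / (4 * (sin phi)^2) <> 0.
Proof.
  intros Hs Hc HK Hp0 HS.
  assert (Hp : (sin phi)^2 <> 0) by (apply pow_nonzero; auto).
  replace (K^2 * gamma^2) with ((K*gamma)^2) by ring. rewrite HK, Hc.
  replace (s * s - (2 * s * S) ^ 2 / (4 * sin phi ^ 2))
    with (s*s*((sin phi)^2 - S^2)/(sin phi)^2) by (field; auto).
  unfold Rdiv. apply Rmult_integral_contrapositive; split.
  - apply Rmult_integral_contrapositive; split; [nra|lra].
  - apply Rinv_neq_0_compat; auto.
Qed.

Lemma zsum_add n f g : zsum n (fun i => (f i + g i)%Z) = (zsum n f + zsum n g)%Z.
Proof. induction n; simpl; [reflexivity| rewrite IHn; ring]. Qed.
Lemma zsum_ext n f g : (forall i, f i = g i) -> zsum n f = zsum n g.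
Proof. intros H; induction n; simpl; [reflexivity| rewrite IHn, H; ring]. Qed.
Lemma rsum_add n f g : rsum n (fun i => f i + g i) = rsum n f + rsum n g.
Proof. induction n; simpl; [ring| rewrite IHn; ring]. Qed.
Lemma rsum_ext n f g : (forall i, f i = g i) -> rsum n f = rsum n g.
Proof. intros H; induction n; simpl; [reflexivity| rewrite IHn, H; ring]. Qed.

Lemma zsum_ev_out n j f : (n < j)%nat -> zsum n (fun i => (f i * ev j i)%Z) = 0%Z.
Proof.
  induction n; intros H; simpl; [reflexivity|]. rewrite IHn by lia.
  unfold ev. replace (Nat.eqb (S n) j) with false by (symmetry; apply Nat.eqb_neq; lia). ring.
Qed.
Lemma zsum_ev n j f : (1 <= j <= n)%nat -> zsum n (fun i => (f i * ev j i)%Z) = f j.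
Proof.
  induction n; intros H; [lia|]. simpl.
  destruct (Nat.eq_dec j (S n)) as [->|Hne].
  - rewrite zsum_ev_out by lia. unfold ev. rewrite Nat.eqb_refl. ring.
  - rewrite IHn by lia. unfold ev.
    replace (Nat.eqb (S n) j) with false by (symmetry; apply Nat.eqb_neq; lia). ring.
Qed.
Lemma rsum_ev_out n j f : (n < j)%nat -> rsum n (fun i => f i * IZR (ev j i)) = 0.
Proof.
  induction n; intros H; simpl; [reflexivity|]. rewrite IHn by lia.
  unfold ev. replace (Nat.eqb (S n) j) with false by (symmetry; apply Nat.eqb_neq; lia). simpl; ring.
Qed.
Lemma rsum_ev n j f : (1 <= j <= n)%nat -> rsum n (fun i => f i * IZR (ev j i)) = f j.
Proof.
  induction n; intros H; [lia|]. simpl.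
  destruct (Nat.eq_dec j (S n)) as [->|Hne].
  - rewrite rsum_ev_out by lia. unfold ev. rewrite Nat.eqb_refl. simpl; ring.
  - rewrite IHn by lia. unfold ev.
    replace (Nat.eqb (S n) j) with false by (symmetry; apply Nat.eqb_neq; lia). simpl; ring.
Qed.

Lemma gdot_add n j l : (1 <= j <= n)%nat -> (1 <= l <= n)%nat ->
  gdot n (vadd (ev j) (ev l)) = (Z.of_nat j + Z.of_nat l)%Z.
Proof.
  intros. unfold gdot, vadd.
  rewrite (zsum_ext _ _ (fun i => (Z.of_nat i * ev j i + Z.of_nat i * ev l i)%Z))
    by (intros; ring).
  rewrite zsum_add, !zsum_ev by auto. reflexivity.
Qed.
Lemma gdot_sub n j l : (1 <= j <= n)%nat -> (1 <= l <= n)%nat ->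
  gdot n (vsub (ev j) (ev l)) = (Z.of_nat j - Z.of_nat l)%Z.
Proof.
  intros. unfold gdot, vsub.
  rewrite (zsum_ext _ _ (fun i => (Z.of_nat i * ev j i + (- Z.of_nat i) * ev l i)%Z))
    by (intros; ring).
  rewrite zsum_add, !zsum_ev by auto. ring.
Qed.
Lemma wdot_add n w j l : (1 <= j <= n)%nat -> (1 <= l <= n)%nat ->
  wdot n w (vadd (ev j) (ev l)) = w j + w l.
Proof.
  intros. unfold wdot, vadd.
  rewrite (rsum_ext _ _ (fun i => w i * IZR (ev j i) + w i * IZR (ev l i)))
    by (intros; rewrite plus_IZR; ring).
  rewrite rsum_add, !rsum_ev by auto. reflexivity.
Qed.
Lemma wdot_sub n w j l : (1 <= j <= n)%nat -> (1 <= l <= n)%nat ->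
  wdot n w (vsub (ev j) (ev l)) = w j - w l.
Proof.
  intros. unfold wdot, vsub.
  rewrite (rsum_ext _ _ (fun i => w i * IZR (ev j i) + (- w i) * IZR (ev l i)))
    by (intros; rewrite minus_IZR; ring).
  rewrite rsum_add, !rsum_ev by auto. ring.
Qed.

Theorem lemma11 (F : R -> R) (b gamma : R) (nu : nat)
  (A1_an : real_analytic_near F (- b))
  (A1_pos : Derive F (- b) > 0)
  (A2_gamma : 0 < gamma < sqrt (Derive F (- b)))
  (A2_nonres : forall k : Z, 2 * sqrt (Derive F (- b)) <> IZR k * gamma)
  (Hnu : INR nu * gamma < 2 * sqrt (Derive F (- b)) < INR (S nu) * gamma) :
  let c := Derive F (- b) in
  let w0 := omega0 c gamma in
  (forall j : nat, (1 <= j <= nu)%nat -> Lambda c gamma j <> 0) /\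
  (forall j l : nat, (1 <= j <= nu)%nat -> (1 <= l <= nu)%nat ->
     real_nonzero (V nu c gamma w0 (vadd (ev j) (ev l)))) /\
  (forall j l : nat, (1 <= j <= nu)%nat -> (1 <= l <= nu)%nat -> j <> l ->
     real_nonzero (V nu c gamma w0 (vsub (ev j) (ev l)))).
Proof.
  cbv zeta. set (c := Derive F (- b)) in *. clearbody c.
  clear A1_an A2_nonres.
  assert (Hs : 0 < sqrt c) by (apply sqrt_lt_R0; lra).
  assert (Hc : c = sqrt c * sqrt c) by (rewrite sqrt_sqrt; lra).
  set (th := fun j : nat => asin (INR j * gamma / (2 * sqrt c))).
  assert (Hw : forall j, omega0 c gamma j = 2 * th j) by reflexivity.
  set (s := sqrt c) in *. clearbody s.
  assert (Hth : forall j, (1 <= j <= nu)%nat ->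
     0 < th j < PI/2 /\ sin (th j) = INR j * gamma / (2 * s)).
  { intros j Hj.
    assert (H1 : 1 <= INR j) by (apply (le_INR 1); lia).
    assert (H2 : INR j <= INR nu) by (apply le_INR; lia).
    assert (Hx0 : 0 < INR j * gamma / (2 * s)).
    { apply Rdiv_lt_0_compat; nra. }
    assert (Hx1 : INR j * gamma / (2 * s) < 1).
    { apply (Rmult_lt_reg_r (2*s)); [lra|]. unfold Rdiv.
      rewrite Rmult_assoc, Rinv_l by lra. nra. }
    assert (Hsin : sin (th j) = INR j * gamma / (2 * s)).
    { unfold th. apply sin_asin; lra. }
    pose proof (asin_bound_lt (INR j * gamma / (2 * s)) ltac:(lra)) as Hb.
    fold (th j) in Hb.
    split; [|exact Hsin]. split; [|lra].
    destruct (Rle_or_lt (th j) 0) as [Hle|]; [|assumption].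
    pose proof (sin_ge_0 (- th j) ltac:(lra) ltac:(lra)).
    rewrite sin_neg in H. lra. }
  split; [|split].
  - intros j Hj. destruct (Hth j Hj) as [[Ha Hb] Hsn].
    unfold Lambda. rewrite Hw. replace (2 * th j / 2) with (th j) by field.
    apply Rgt_not_eq, Rdiv_lt_0_compat.
    + assert (0 < cos (th j)) by (apply cos_gt_0; lra).
      assert (1 <= INR j) by (apply (le_INR 1); lia).
      apply Rmult_lt_0_compat; [apply pow_lt; nra|lra].
    + assert (0 < sin (th j)) by (apply sin_gt_0; lra).
      apply Rmult_lt_0_compat; [lra|apply pow_lt; lra].
  - intros j l Hj Hl. destruct (Hth j Hj) as [[Ha1 Ha2] Hsa].
    destruct (Hth l Hl) as [[Hb1 Hb2] Hsb].
    unfold V. cbv zeta. rewrite gdot_add, wdot_add by auto.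
    destruct (Z.eqb_spec (Z.of_nat j + Z.of_nat l) 0); [lia|].
    rewrite !Hw.
    destruct (excluded_middle_informative _) as [[z Hz]|Hn].
    + exfalso. assert (0 < PI * IZR z < PI) by lra.
      pose proof PI_RGT_0.
      assert (Q1 : 0 < IZR z) by nra. assert (Q2 : IZR z < 1) by nra.
      apply lt_IZR in Q1. apply lt_IZR in Q2. lia.
    + eexists; split; [reflexivity|].
      pose proof (key_plus _ _ (conj Ha1 Ha2) (conj Hb1 Hb2)) as Hk.
      replace ((2 * th j + 2 * th l) / 2) with (th j + th l) by field.
      apply (val_nz c s gamma _ (sin (th j) + sin (th l))); auto.
      * rewrite plus_IZR, <- !INR_IZR_INZ, Hsa, Hsb. field. lra.
      * lra.
      * intro HH. assert (sin (th j + th l) = sin (th j) + sin (th l)) by nra. lra.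
  - intros j l Hj Hl Hjl. destruct (Hth j Hj) as [[Ha1 Ha2] Hsa].
    destruct (Hth l Hl) as [[Hb1 Hb2] Hsb].
    assert (Hmono : forall p q, (1 <= p <= nu)%nat -> (1 <= q <= nu)%nat ->
              (p < q)%nat -> th p < th q).
    { intros p q Hp Hq Hpq. destruct (Hth p Hp) as [[? ?] Hp'].
      destruct (Hth q Hq) as [[? ?] Hq'].
      apply sin_increasing_0; try lra. rewrite Hp', Hq'.
      apply Rmult_lt_compat_r; [apply Rinv_0_lt_compat; lra|].
      apply Rmult_lt_compat_r; [lra|]. apply lt_INR; auto. }
    assert (Hord : th l < th j \/ th j < th l).
    { destruct (Nat.lt_ge_cases j l) as [H|H].
      - right; apply Hmono; auto.
      - left; apply Hmono; auto; lia. }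
    unfold V. cbv zeta. rewrite gdot_sub, wdot_sub by auto.
    destruct (Z.eqb_spec (Z.of_nat j - Z.of_nat l) 0); [lia|].
    rewrite !Hw.
    destruct (excluded_middle_informative _) as [[z Hz]|Hn].
    + exfalso. assert (Hz' : th j - th l = PI * IZR z) by lra.
      pose proof PI_RGT_0.
      destruct (Z.lt_trichotomy z 0) as [Hz0|[Hz0|Hz0]].
      * assert (IZR z <= -1) by (apply IZR_le; lia). nra.
      * subst z. simpl in Hz'. lra.
      * assert (1 <= IZR z) by (apply IZR_le; lia). nra.
    + eexists; split; [reflexivity|].
      replace ((2 * th j - 2 * th l) / 2) with (th j - th l) by field.
      apply (val_nz c s gamma _ (sin (th j) - sin (th l))); auto.
      * rewrite minus_IZR, <- !INR_IZR_INZ, Hsa, Hsb. field. lra.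
      * destruct Hord as [Ho|Ho].
        -- pose proof (key_minus (th j) (th l) Hb1 Ho Ha2). lra.
        -- pose proof (key_minus (th l) (th j) Ha1 Ho Hb2).
           replace (th j - th l) with (- (th l - th j)) by ring. rewrite sin_neg. lra.
      * destruct Hord as [Ho|Ho].
        -- pose proof (key_minus (th j) (th l) Hb1 Ho Ha2). intro HH. nra.
        -- pose proof (key_minus (th l) (th j) Ha1 Ho Hb2).
           replace (th j - th l) with (- (th l - th j)) by ring. rewrite sin_neg.
           intro HH. nra.
Qed.
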